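(* Let $\mathbb{D}=\{z\in\mathbb{C}:|z|<1\}$. For all $z_1,z_2\in\mathbb{D}$, \[ b_{\mathbb{D},2}(z_1,z_2)=\frac{|z_1-z_2|}{\sqrt{2+|z_1|^2+|z_2|^2-2|z_1+z_2|}}. \] In particular, for every $t\in(-1,1)$, $\lim_{r\to1,\ r\in(0,1)}b_{\mathbb{D},2}(r,t)=1$.
   Context: For $z_1,z_2\in\mathbb{D}$, $b_{\mathbb{D},2}(z_1,z_2)=\sup_{z\in\partial\mathbb{D}}\frac{|z_1-z_2|}{\sqrt{|z_1-z|^2+|z-z_2|^2}}$. *)

(* Defs.v *)
From Stdlib Require Import Reals.
From Coquelicot Require Import Coquelicot.
Open Scope R_scope.

Definition in_unit_disc (z : C) : Prop := Cmod z < 1.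

Definition b_D2 (z1 z2 : C) : Rbar :=
  Lub_Rbar (fun x : R => exists z : C, Cmod z = 1 /\
     x = Cmod (Cminus z1 z2) / sqrt (Cmod (Cminus z1 z) ^ 2 + Cmod (Cminus z z2) ^ 2)).

(* Main.v *)
Require Import Defs.
From Stdlib Require Import Reals Lra Psatz.
From Coquelicot Require Import Coquelicot.
Open Scope R_scope.

Lemma Cmod_sq (z : C) : Cmod z ^ 2 = fst z ^ 2 + snd z ^ 2.
Proof. unfold Cmod. rewrite pow2_sqrt; [reflexivity|nra]. Qed.

Lemma cs_ineq x y p q : x^2 + y^2 = 1 -> x*p + y*q <= sqrt (p^2+q^2).
Proof.
  intros H.
  destruct (Rle_dec (x*p+y*q) 0) as [h|h].
  - pose proof (sqrt_pos (p^2+q^2)); lra.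
  - apply Rnot_le_lt in h. rewrite <- (sqrt_pow2 (x*p+y*q)) by lra.
    apply sqrt_le_1_alt. pose proof (pow2_ge_0 (x*q-y*p)). replace (p^2+q^2) with ((x^2+y^2)*(p^2+q^2)) by (rewrite H; ring). nra.
Qed.

Lemma part1 (z1 z2 : C) : in_unit_disc z1 -> in_unit_disc z2 ->
     b_D2 z1 z2 =
     Finite (Cmod (Cminus z1 z2) /
             sqrt (2 + Cmod z1 ^ 2 + Cmod z2 ^ 2 - 2 * Cmod (Cplus z1 z2))).
Proof.
  intros H1 H2. unfold in_unit_disc in *. unfold b_D2.
  apply is_lub_Rbar_unique.
  set (D := 2 + Cmod z1 ^ 2 + Cmod z2 ^ 2 - 2 * Cmod (Cplus z1 z2)).
  assert (HD : 0 < D).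
  { unfold D. pose proof (Cmod_triangle z1 z2). pose proof (Cmod_ge_0 z1).
    pose proof (Cmod_ge_0 z2). nra. }
  assert (key : forall z : C, Cmod z = 1 ->
     Cmod (Cminus z1 z) ^ 2 + Cmod (Cminus z z2) ^ 2 =
     D + 2 * (Cmod (Cplus z1 z2) - (fst z * (fst z1 + fst z2) + snd z * (snd z1 + snd z2)))).
  { intros z Hz. unfold D. rewrite !Cmod_sq.
    assert (Hz2 : fst z ^2 + snd z ^2 = 1) by (rewrite <- Cmod_sq, Hz; ring).
    destruct z1 as [a b], z2 as [c d], z as [x y]. simpl in *. nra. }
  split.
  - intros v [z [Hz ->]].
    assert (Hz2 : fst z ^2 + snd z ^2 = 1) by (rewrite <- Cmod_sq, Hz; ring).
    pose proof (cs_ineq (fst z) (snd z) (fst z1 + fst z2) (snd z1 + snd z2) Hz2) as hc.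
    assert (hm : Cmod (Cplus z1 z2) = sqrt ((fst z1 + fst z2)^2 + (snd z1 + snd z2)^2))
      by (destruct z1, z2; reflexivity).
    rewrite key by exact Hz.
    unfold Rdiv. apply Rmult_le_compat_l. apply Cmod_ge_0.
    apply Rinv_le_contravar. apply sqrt_lt_R0; exact HD.
    apply sqrt_le_1_alt. lra.
  - intros b Hb. apply Hb.
    destruct (Req_dec (Cmod (Cplus z1 z2)) 0) as [h0|h0].
    + exists (RtoC 1). split. rewrite Cmod_R; apply Rabs_R1.
      rewrite key by (rewrite Cmod_R; apply Rabs_R1).
      pose proof (Cmod_eq_0 _ h0) as h1. rewrite h0.
      destruct z1 as [a b0], z2 as [c d].
      unfold Cplus in h1; simpl in h1. injection h1; intros e1 e2.
      f_equal. f_equal. f_equal. simpl. lra.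
    + set (m := Cmod (Cplus z1 z2)) in *.
      assert (hm : m ^ 2 = (fst z1 + fst z2)^2 + (snd z1 + snd z2)^2)
        by (unfold m; rewrite Cmod_sq; destruct z1, z2; reflexivity).
      pose proof (Cmod_ge_0 (Cplus z1 z2)) as hm0. fold m in hm0.
      set (p := fst z1 + fst z2) in *. set (q := snd z1 + snd z2) in *.
      assert (hpq : (p/m)^2 + (q/m)^2 = 1).
      { replace ((p/m)^2 + (q/m)^2) with ((p^2+q^2)/m^2) by (field; lra).
        rewrite <- hm. field. lra. }
      assert (hz : Cmod (p/m, q/m) = 1).
      { unfold Cmod; simpl fst; simpl snd. rewrite hpq. apply sqrt_1. }
      exists (p/m, q/m). split. exact hz.
      rewrite key by exact hz. simpl fst; simpl snd.
      replace (p / m * p + q / m * q) with ((p^2+q^2)/m) by (field; lra).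
      rewrite <- hm. f_equal. f_equal. f_equal. field. lra.
Qed.

Lemma part2 (t : R) : -1 < t < 1 ->
     filterlim (fun r : R => b_D2 (RtoC r) (RtoC t))
               (within (fun r : R => 0 < r < 1) (locally 1))
               (Rbar_locally (Finite 1)).
Proof.
  intros Ht.
  assert (H1 : 2 + 1^2 + t^2 - 2 * Rabs (1 + t) = (1 - t)^2).
  { rewrite Rabs_right by lra. ring. }
  set (g := fun r => Rabs (r - t) / sqrt (2 + r^2 + t^2 - 2 * Rabs (r + t))).
  apply filterlim_within_ext with (f := fun r => Finite (g r)).
  { intros r Hr. cbv beta in Hr. rewrite part1.
    2,3: unfold in_unit_disc; rewrite Cmod_R; apply Rabs_def1; lra.
    unfold g. f_equal.
    replace (Cminus (RtoC r) (RtoC t)) with (RtoC (r - t))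
      by (unfold Cminus, Cplus, Copp, RtoC; simpl; f_equal; ring).
    replace (Cplus (RtoC r) (RtoC t)) with (RtoC (r + t))
      by (unfold Cplus, RtoC; simpl; f_equal; ring).
    rewrite !Cmod_R.
    rewrite !pow2_abs. reflexivity. }
  assert (Hc : continuity_pt g 1).
  { unfold g. apply continuity_pt_div.
    - apply continuity_pt_comp with (f1 := fun r => r - t).
      + apply continuity_pt_minus. apply continuity_pt_id. apply continuity_pt_const. intros a b; reflexivity.
      + apply Rcontinuity_abs.
    - apply continuity_pt_comp with (f1 := fun r => 2 + r^2 + t^2 - 2 * Rabs (r + t)).
      + apply continuity_pt_minus. apply continuity_pt_plus. apply continuity_pt_plus.
        * apply continuity_pt_const. intros a b; reflexivity.
        * apply derivable_continuous_pt. apply derivable_pt_pow.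
        * apply continuity_pt_const. intros a b; reflexivity.
        * apply continuity_pt_scal.
          apply continuity_pt_comp with (f1 := fun r => r + t).
          apply continuity_pt_plus. apply continuity_pt_id. apply continuity_pt_const. intros a b; reflexivity.
          apply Rcontinuity_abs.
      + apply continuity_pt_sqrt. rewrite H1. nra.
    - apply Rgt_not_eq. rewrite H1. apply sqrt_lt_R0. nra. }
  apply continuity_pt_filterlim in Hc.
  assert (Hg1 : g 1 = 1).
  { unfold g. rewrite H1.
    rewrite sqrt_pow2 by lra. rewrite Rabs_right by lra. field. lra. }
  rewrite Hg1 in Hc.
  intros P HP. simpl in HP. specialize (Hc _ HP).
  unfold filtermap in *. apply filter_le_within. exact Hc.
Qed.

Theorem theorem3p15 :
  (forall z1 z2 : C, in_unit_disc z1 -> in_unit_disc z2 ->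
     b_D2 z1 z2 =
     Finite (Cmod (Cminus z1 z2) /
             sqrt (2 + Cmod z1 ^ 2 + Cmod z2 ^ 2 - 2 * Cmod (Cplus z1 z2)))) /\
  (forall t : R, -1 < t < 1 ->
     filterlim (fun r : R => b_D2 (RtoC r) (RtoC t))
               (within (fun r : R => 0 < r < 1) (locally 1))
               (Rbar_locally (Finite 1))).
Proof. split. exact part1. exact part2. Qed.
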